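(* Let $G_H$ be a finite undirected multigraph (parallel edges allowed, no self-loops) with vertex set $V$ and edge set partitioned as $E = S \sqcup S^c$ into secure edges $S$ and insecure edges $S^c$. (1) If $S^c \neq \emptyset$ (even if $|S^c| = 1$), then $G_H$ admits both a hidden generalized attack and a detectable generalized attack. (2) If $G_H$ admits a hidden (respectively detectable) generalized attack and $G'$ is obtained from $G_H$ by adding new secure edges between vertices of $V$, then $G'$ also admits a hidden (respectively detectable) generalized attack.
   Context: For a nonempty proper subset $U \subsetneq V$, the cut $\delta(U)$ is the set of edges with exactly one endpoint in $U$; a cut is any set of this form. A generalized attack is a triple $(C,J,I)$ where $C$ is a cut, $J \subseteq C$ is a set of jammed edges (secure or insecure), and $I \subseteq (C \cap S^c)\setminus J$ is a nonempty set of insecure edges into which data is injected. The attack is hidden if $I \cup J = C$, and detectable if $2|I| > |C\setminus J|$. *)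

(* Defs.v *)
From mathcomp Require Import all_boot.
Set Implicit Arguments. Unset Strict Implicit. Unset Printing Implicit Defensive.

(* A finite multigraph: vertex type V, edge type E (both finite), and an
   endpoint map [ends : E -> V * V]; parallel edges are distinct elements of E
   with the same endpoints.  The orientation of the pair is irrelevant for
   everything below (cuts are symmetric). *)
Definition loopless (V E : finType) (ends : E -> V * V) : Prop :=
  forall e : E, (ends e).1 != (ends e).2.

Definition delta (V E : finType) (ends : E -> V * V) (U : {set V}) : {set E} :=
  [set e | ((ends e).1 \in U) != ((ends e).2 \in U)].

Definition is_cut (V E : finType) (ends : E -> V * V) (C : {set E}) : Prop :=
  exists U : {set V}, [/\ U != set0, U != setT & C = delta ends U].

Definition gen_attack (V E : finType) (ends : E -> V * V) (S : {set E})
    (C J I : {set E}) : Prop :=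
  [/\ is_cut ends C, J \subset C, I \subset (C :&: ~: S) :\: J & I != set0].

Definition hidden_attack (V E : finType) (ends : E -> V * V) (S : {set E})
    (C J I : {set E}) : Prop :=
  gen_attack ends S C J I /\ I :|: J = C.

Definition detectable_attack (V E : finType) (ends : E -> V * V) (S : {set E})
    (C J I : {set E}) : Prop :=
  gen_attack ends S C J I /\ #|C :\: J| < 2 * #|I|.

Definition admits_hidden (V E : finType) (ends : E -> V * V) (S : {set E}) :=
  exists C J I : {set E}, hidden_attack ends S C J I.

Definition admits_detectable (V E : finType) (ends : E -> V * V) (S : {set E}) :=
  exists C J I : {set E}, detectable_attack ends S C J I.

(* Main.v *)
Require Import Defs.
From mathcomp Require Import all_boot.

Lemma lift_attack (V E : finType) (ends : E -> V * V) (S : {set E})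
  (E' : finType) (ends' : E' -> V * V) (S' : {set E'}) (f : E -> E') :
  injective f ->
  (forall e : E, ends' (f e) = ends e) ->
  (forall e : E, (f e \in S') = (e \in S)) ->
  (forall e' : E', e' \notin codom f -> e' \in S') ->
  forall C J I, gen_attack ends S C J I ->
  exists C' J', gen_attack ends' S' C' J' (f @: I) /\ J' \subset C' /\
    C' :\: J' = f @: (C :\: J).
Proof.
move=> finj fends fS fnew C J I [[U [U0 UT ->]] JC IC In0].
have memf : forall e, (f e \in delta ends' U) = (e \in delta ends U).
  by move=> e; rewrite !inE fends.
set C' := delta ends' U.
have fC : f @: delta ends U \subset C'.
  by apply/subsetP=> x /imsetP [e He ->]; rewrite memf.
exists C', (C' :\: f @: (delta ends U :\: J)).
have Hd : C' :\: (C' :\: f @: (delta ends U :\: J)) = f @: (delta ends U :\: J).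
  apply/setP=> x; rewrite !inE; case Hx: (x \in f @: _); rewrite ?andbF ?andbT ?andNb //=.
  move/imsetP: Hx => [e He ->]; rewrite fends; move: He; rewrite !inE.
  by case/andP.
split; [|split; [exact: subsetDl | exact: Hd]].
split.
- by exists U.
- exact: subsetDl.
- apply/subsetP=> x /imsetP [e He ->].
  move/subsetP: IC => /(_ e He); rewrite !inE => /andP [HJ /andP [HC HS]].
  rewrite fends fS HS HC /= !andbT negbK.
  by apply/imsetP; exists e => //; rewrite !inE HJ HC.
- apply/negP => /eqP H; move/set0Pn: In0 => [e He].
  have : f e \in f @: I by apply/imsetP; exists e.
  by rewrite H inE.
Qed.

Theorem theorem8 (V E : finType) (ends : E -> V * V) (S : {set E}) :
  loopless ends ->
  (~: S != set0 -> admits_hidden ends S /\ admits_detectable ends S) /\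
  (forall (E' : finType) (ends' : E' -> V * V) (S' : {set E'}) (f : E -> E'),
     loopless ends' ->
     injective f ->
     (forall e : E, ends' (f e) = ends e) ->
     (forall e : E, (f e \in S') = (e \in S)) ->
     (forall e' : E', e' \notin codom f -> e' \in S') ->
     (admits_hidden ends S -> admits_hidden ends' S') /\
     (admits_detectable ends S -> admits_detectable ends' S')).
Proof.
move=> Hl; split.
  move=> /set0Pn [e He].
  set U := [set (ends e).1].
  have eC : e \in delta ends U.
    by rewrite !inE eqxx /= (eq_sym (ends e).2) (negbTE (Hl e)).
  have GA : gen_attack ends S (delta ends U) (delta ends U :\ e) [set e].
    split.
    - exists U; split.
      + by apply/set0Pn; exists (ends e).1; rewrite inE.
      + apply/negP => /eqP H.
        have : (ends e).2 \in U by rewrite H inE.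
        by rewrite inE eq_sym (negbTE (Hl e)).
      + by [].
    - exact: subsetDl.
    - by rewrite sub1set !inE eqxx /= (eq_sym (ends e).2) (negbTE (Hl e)) -in_setC He eqxx.
    - by rewrite -cards_eq0 cards1.
  split.
  - exists (delta ends U), (delta ends U :\ e), [set e]; split => //.
    by rewrite setD1K.
  - exists (delta ends U), (delta ends U :\ e), [set e]; split => //.
    by rewrite setDDr setDv set0U (setIidPr _) ?sub1set // cards1.
move=> E' ends' S' f _ finj fends fS fnew; split.
  move=> [C [J [I [GA HU]]]].
  have [C' [J' [GA' [JC' Hd]]]] := @lift_attack V E ends S E' ends' S' f finj fends fS fnew C J I GA.
  exists C', J', (f @: I); split => //.
  have CJ : C :\: J = I.
    case: GA => _ _ IC _; apply/setP=> x; rewrite -HU !inE.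
    case Hx: (x \in I); case Hj: (x \in J) => //=.
    by move/subsetP: IC => /(_ x Hx); rewrite !inE Hj.
  rewrite -CJ -Hd; apply/setP=> x; rewrite !inE.
  case Hx: (x \in J') => /=; last by rewrite ?andbT ?orbF.
  by rewrite ?orbT; move/subsetP: JC' => /(_ x Hx).
move=> [C [J [I [GA Hc]]]].
have [C' [J' [GA' [JC' Hd]]]] := @lift_attack V E ends S E' ends' S' f finj fends fS fnew C J I GA.
exists C', J', (f @: I); split => //.
by rewrite Hd !card_imset.
Qed.
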